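(* For every integer $k>1$ and every integer $1\le\Delta\le k$, there exists a finite instance $\mathbf{X}\subset\mathbb{R}^d$ such that, with probability at least $1-e^{-\sqrt{k}/2}$, the set $C_{k+\Delta}$ of the first $k+\Delta$ centers chosen by $k$-means++ seeding satisfies $$\mathrm{cost}(\mathbf{X},C_{k+\Delta})>\frac18\ln\frac{k}{\Delta}\cdot\mathrm{OPT}_k(\mathbf{X}).$$
   Context: $\mathrm{cost}(x,C)=\min_{c\in C}\|x-c\|^2$, $\mathrm{cost}(\mathbf{Y},C)=\sum_{x\in\mathbf{Y}}\mathrm{cost}(x,C)$, $\mathrm{OPT}_k(\mathbf{X})=\min_{|C|=k}\mathrm{cost}(\mathbf{X},C)$. $k$-means++ seeding: $c_1$ uniform from $\mathbf{X}$, $C_1=\{c_1\}$; $C_{t+1}=C_t\cup\{x\}$ with $x$ chosen with probability $\mathrm{cost}(x,C_t)/\mathrm{cost}(\mathbf{X},C_t)$. *)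

(* Defs.v *)
From HB Require Import structures.
From mathcomp Require Import all_boot all_order all_algebra.
From mathcomp Require Import all_classical all_reals all_analysis.
Set Implicit Arguments. Unset Strict Implicit. Unset Printing Implicit Defensive.
Import Order.TTheory GRing.Theory Num.Theory.
Local Open Scope classical_set_scope.
Local Open Scope ring_scope.

Section KMeans.
Variables (R : realType) (d : nat).
Implicit Types (x c : 'rV[R]_d) (X C : seq 'rV[R]_d).

Definition sqdist x c : R := \sum_(i < d) (x ord0 i - c ord0 i) ^+ 2.

(* cost(x, C) = min_{c in C} ||x - c||^2  (convention: 0 if C is empty,
   never used in the statement) *)
Definition cost_pt x C : R :=
  match C with
  | [::] => 0
  | c :: C' => foldr (fun c' m => Num.min (sqdist x c') m) (sqdist x c) C'
  end.

Definition cost X C : R := \sum_(x <- X) cost_pt x C.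

Definition OPT (k : nat) X : R :=
  inf [set cost X C | C in [set C : seq 'rV[R]_d | uniq C /\ size C = k]].

Definition seed_step X C x : R :=
  if C is [::] then (size X)%:R^-1 else cost_pt x C / cost X C.

Definition seed_prob X (s : seq 'rV[R]_d) : R :=
  \prod_(i < size s) seed_step X (take i s) (nth 0 s i).

(* probability that the set C_m of the first m k-means++ centers satisfies E.
   Points of X are indexed by 'I_(size X); X is assumed duplicate-free. *)
Definition kmpp_prob X (m : nat) (E : seq 'rV[R]_d -> bool) : R :=
  \sum_(t : m.-tuple 'I_(size X))
     let s := [seq nth 0 X (val i) | i <- t] in seed_prob X s * (E s)%:R.

End KMeans.

(* Main.v *)
Require Import Defs.
From HB Require Import structures.
From mathcomp Require Import all_boot all_order all_algebra.
From mathcomp Require Import all_classical all_reals all_analysis.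
From mathcomp Require Import ring lra zify.
Import Order.TTheory GRing.Theory Num.Theory.
Local Open Scope ring_scope.
Set Implicit Arguments. Unset Strict Implicit. Unset Printing Implicit Defensive.
Lemma sum_tuple_rcons (R : nmodType) n m (F : seq 'I_n -> R) :
  \sum_(t : m.+1.-tuple 'I_n) F t =
  \sum_(t : m.-tuple 'I_n) \sum_(i : 'I_n) F (rcons t i).
Proof.
rewrite pair_bigA /=.
pose h (p : m.-tuple 'I_n * 'I_n) := rcons_tuple p.1 p.2.
rewrite (reindex h) /=; last first.
  exists (fun t : m.+1.-tuple 'I_n =>
            (belast_tuple (thead t) (behead_tuple t), last (thead t) (behead t))).
    move=> [t i] _ /=.
    case: t => [[|y t'] /= ht].
      by congr pair; apply: val_inj.
    congr pair; first apply: val_inj => /=.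
      by rewrite belast_rcons.
    by rewrite last_rcons.
  move=> t _; apply: val_inj => /=.
  by rewrite -lastI; have := congr1 val (tuple_eta t).
done.
Qed.

Section Prob.
Variables (R : realType) (d : nat) (X : seq 'rV[R]_d).
Local Notation n := (size X).

Lemma sqdist_ge0 (x c : 'rV[R]_d) : 0 <= sqdist x c.
Proof. by apply: sumr_ge0 => i _; exact: sqr_ge0. Qed.

Lemma foldr_min_ge0 x (C : seq 'rV[R]_d) v :
  0 <= v -> 0 <= foldr (fun c' m => Num.min (sqdist x c') m) v C.
Proof.
elim: C => //= c C IH hv; rewrite le_min sqdist_ge0 /=; exact: IH.
Qed.

Lemma cost_pt_ge0 x (C : seq 'rV[R]_d) : 0 <= cost_pt x C.
Proof. case: C => //= c C; apply: foldr_min_ge0; exact: sqdist_ge0. Qed.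

Lemma cost_ge0 (Y C : seq 'rV[R]_d) : 0 <= cost Y C.
Proof. by apply: sumr_ge0 => i _; exact: cost_pt_ge0. Qed.

Lemma seed_step_ge0 C x : 0 <= seed_step X C x.
Proof.
case: C => [|c C] /=; first by rewrite invr_ge0.
apply: divr_ge0; [exact: (cost_pt_ge0 x (c :: C))|exact: cost_ge0].
Qed.

Lemma seed_prob_ge0 s : 0 <= seed_prob X s.
Proof. by apply: prodr_ge0 => i _; exact: seed_step_ge0. Qed.

Lemma seed_prob_rcons s x :
  seed_prob X (rcons s x) = seed_prob X s * seed_step X s x.
Proof.
rewrite /seed_prob size_rcons big_ord_recr /=.
rewrite -cats1 take_size_cat // nth_cat ltnn subnn /=.
congr (_ * _); apply: eq_bigr => i _.
by rewrite takel_cat ?nth_cat ?ltn_ord // ltnW.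
Qed.


Local Notation f := (fun i : 'I_n => nth 0 X i).

Lemma pot_le m (Psi : seq 'I_n -> R) :
  (forall t : seq 'I_n, (size t < m)%N ->
     \sum_(i : 'I_n) seed_step X [seq f j | j <- t] (f i) * Psi (rcons t i) <= Psi t) ->
  \sum_(t : m.-tuple 'I_n) seed_prob X [seq f j | j <- t] * Psi t <= Psi [::].
Proof.
elim: m => [|m IH] H.
  rewrite (big_pred1 [tuple]) /=; last by move=> t; symmetry; apply/eqP; exact: tuple0.
  by rewrite /seed_prob big_ord0 mul1r.
rewrite (@sum_tuple_rcons _ _ m (fun s => seed_prob X [seq f j | j <- s] * Psi s)); apply: le_trans (IH _); last first.
  by move=> t ht; apply: H; apply: ltn_trans ht _.
apply: ler_sum => t _.
under eq_bigr => i _ do rewrite map_rcons seed_prob_rcons -mulrA.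
rewrite -mulr_sumr; apply: ler_wpM2l; first exact: seed_prob_ge0.
by apply: H; rewrite size_tuple.
Qed.

Lemma pot_ge m (Psi : seq 'I_n -> R) :
  (forall t : seq 'I_n, (size t < m)%N ->
     Psi t <= \sum_(i : 'I_n) seed_step X [seq f j | j <- t] (f i) * Psi (rcons t i)) ->
  Psi [::] <= \sum_(t : m.-tuple 'I_n) seed_prob X [seq f j | j <- t] * Psi t.
Proof.
elim: m => [|m IH] H.
  rewrite (big_pred1 [tuple]) /=; last by move=> t; symmetry; apply/eqP; exact: tuple0.
  by rewrite /seed_prob big_ord0 mul1r.
rewrite (@sum_tuple_rcons _ _ m (fun s => seed_prob X [seq f j | j <- s] * Psi s)); apply: le_trans (IH _) _.
  by move=> t ht; apply: H; apply: ltn_trans ht _.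
apply: ler_sum => t _.
under [X in _ <= X]eq_bigr => i _ do rewrite map_rcons seed_prob_rcons -mulrA.
rewrite -mulr_sumr; apply: ler_wpM2l; first exact: seed_prob_ge0.
by apply: H; rewrite size_tuple.
Qed.

End Prob.

Section CostPt.
Variables (R : realType) (d : nat).
Implicit Types (x c : 'rV[R]_d) (C : seq 'rV[R]_d).

Lemma foldr_min_le x C v :
  foldr (fun c' m => Num.min (sqdist x c') m) v C <= v /\
  forall c, c \in C -> foldr (fun c' m => Num.min (sqdist x c') m) v C <= sqdist x c.
Proof.
elim: C => [|c0 C [IH1 IH2]] /=; first by split.
split; first by rewrite ge_min IH1 orbT.
move=> c; rewrite inE => /orP[/eqP->|hc]; first by rewrite ge_min lexx.
by rewrite ge_min IH2 ?orbT.
Qed.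

Lemma foldr_min_ge x C v m :
  m <= v -> (forall c, c \in C -> m <= sqdist x c) ->
  m <= foldr (fun c' m => Num.min (sqdist x c') m) v C.
Proof.
elim: C => [|c0 C IH] //= hv hC.
rewrite le_min hC ?mem_head //= IH // => c hc; apply: hC.
by rewrite inE hc orbT.
Qed.

Lemma cost_pt_le x C c : c \in C -> cost_pt x C <= sqdist x c.
Proof.
case: C => [|c0 C] //=; rewrite inE => /orP[/eqP->|hc].
  by case: (foldr_min_le x C (sqdist x c0)).
by case: (foldr_min_le x C (sqdist x c0)) => _; apply.
Qed.

Lemma cost_pt_ge x C m : C != [::] -> (forall c, c \in C -> m <= sqdist x c) ->
  m <= cost_pt x C.
Proof.
case: C => [|c0 C] //= _ hC; apply: foldr_min_ge; first by apply: hC; rewrite mem_head.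
by move=> c hc; apply: hC; rewrite inE hc orbT.
Qed.

Lemma sqdist_xx x : sqdist x x = 0.
Proof. by rewrite /sqdist big1 // => i _; rewrite subrr expr0n. Qed.

End CostPt.

Section Inst.
Variables (R : realType) (N K : nat) (A : R).
Hypothesis A1 : 1 <= A.
Local Notation d := (N + K)%N.

Definition w (i : nat) : R := if (i < N)%N then 1 else Num.sqrt A.
Definition pt (i : nat) : 'rV[R]_d := \row_(l < d) (if (l : nat) == i then w i else 0).
Definition Xs : seq 'rV[R]_d := map pt (iota 0 d).

Lemma w2 i : w i ^+ 2 = if (i < N)%N then 1 else A.
Proof. rewrite /w; case: ifP => _; first by rewrite expr1n. by rewrite sqr_sqrtr // (le_trans _ A1). Qed.

Lemma w2_ge1 i : 1 <= w i ^+ 2.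
Proof. by rewrite w2; case: ifP. Qed.

Lemma w2_leA i : w i ^+ 2 <= A.
Proof. by rewrite w2; case: ifP. Qed.

Lemma w_neq0 i : w i != 0.
Proof. by apply/eqP => h; have := w2_ge1 i; rewrite h expr0n /= ler10. Qed.

Lemma sum_if_eq (i : nat) (c : R) : (i < d)%N ->
  \sum_(l < d) (if (l : nat) == i then c else 0) = c.
Proof.
move=> hi; rewrite (bigD1 (Ordinal hi)) //= eqxx big1 ?addr0 // => l hl.
case: eqP => // hli; case/negP: hl; apply/eqP; apply: val_inj => /=.
exact: hli.
Qed.

Lemma sqdist_pp i j : (i < d)%N -> (j < d)%N ->
  sqdist (pt i) (pt j) = if i == j then 0 else w i ^+ 2 + w j ^+ 2.
Proof.
move=> hi hj; case: eqP => [->|hij]; first exact: sqdist_xx.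
rewrite /sqdist.
transitivity (\sum_(l < d) ((if (l : nat) == i then w i ^+ 2 else 0) +
                           (if (l : nat) == j then w j ^+ 2 else 0))).
  apply: eq_bigr => l _; rewrite !mxE.
  case: (eqVneq (l : nat) i) => [hl|hl]; case: (eqVneq (l : nat) j) => [hl'|hl'].
  - by exfalso; apply: hij; rewrite -hl -hl'.
  - by rewrite subr0 addr0.
  - by rewrite sub0r sqrrN add0r.
  - by rewrite subrr expr0n addr0.
by rewrite big_split /= !sum_if_eq.
Qed.

Lemma sqdist_p0 i : (i < d)%N -> sqdist (pt i) 0 = w i ^+ 2.
Proof.
move=> hi; rewrite /sqdist -(sum_if_eq (w i ^+ 2) hi); apply: eq_bigr => l _.
by rewrite !mxE subr0; case: eqP => _ //; rewrite expr0n.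
Qed.

Lemma size_Xs : size Xs = d.
Proof. by rewrite size_map size_iota. Qed.

Lemma nth_Xs i : (i < d)%N -> nth 0 Xs i = pt i.
Proof. by move=> hi; rewrite (nth_map 0%N) ?size_iota // nth_iota. Qed.

Lemma pt_inj : {in gtn d &, injective pt}.
Proof.
move=> i j hi hj /(congr1 (fun x : 'rV[R]_d => x ord0 (Ordinal hi))).
rewrite !mxE /= eqxx; case: eqP => // _ h; exfalso; move: (w_neq0 i).
by rewrite h eqxx.
Qed.

Lemma uniq_Xs : uniq Xs.
Proof.
rewrite map_inj_in_uniq ?iota_uniq //.
by move=> i j; rewrite !mem_iota /= !add0n => hi hj; apply: pt_inj.
Qed.

End Inst.

Section Card.
Local Open Scope nat_scope.
Lemma card_lt (n N : nat) : N <= n -> #|[pred i : 'I_n | i < N]| = N.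
Proof.
move=> hN; rewrite -sum1_card.
have := big_ord_widen_cond (op := addn) (idx := 0%N) n xpredT (fun _ => 1%N) hN.
rewrite /= sum1_card card_ord => h.
by rewrite [in RHS]h; apply: eq_bigl => i.
Qed.

Lemma card_ge (n N : nat) : N <= n -> #|[pred i : 'I_n | N <= i]| = n - N.
Proof.
move=> hN; have := cardC [pred i : 'I_n | i < N]; rewrite card_lt // card_ord => h.
have -> : #|[pred i : 'I_n | N <= i]| = #|[predC [pred i : 'I_n | i < N]]|.
  by apply: eq_card => i; rewrite !inE /= -ltnNge.
by move: h; set c := #|_| => h; rewrite -[in n - N]h addKn.
Qed.

Lemma card_unch (n N : nat) (t : seq 'I_n) : N <= n ->
  N - size t <= #|[pred i : 'I_n | (i < N) && (i \notin t)]|.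
Proof.
move=> hN; have hc := cardID (mem t) [pred i : 'I_n | i < N].
rewrite card_lt // in hc.
have h1 : #|[predI [pred i : 'I_n | i < N] & mem t]| <= size t.
  apply: leq_trans (card_size t); apply: subset_leq_card.
  by apply/fintype.subsetP => i; rewrite !inE => /andP[].
have h2 : #|[predD [pred i : 'I_n | i < N] & mem t]| =
          #|[pred i : 'I_n | (i < N) && (i \notin t)]|.
  by apply: eq_card => i; rewrite !inE andbC.
rewrite -h2; move: h1 hc; set a := #|_|; set b := #|_| => h1 hc.
by rewrite -hc leq_subLR leq_add2r.
Qed.

End Card.
Section Real.
Variable R : realType.

Definition phi (s : R) (v : nat) : R := (3 * v%:R + 2 * s) / (3 * (s + v%:R)).

Lemma phi_gt0 s v : 0 < s -> 0 < phi s v.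
Proof.
move=> hs; rewrite /phi divr_gt0 //.
  by apply: ltr_wpDl; [rewrite mulr_ge0 ?ler0n|rewrite mulr_gt0].
by rewrite mulr_gt0 // ltr_wpDr.
Qed.

Lemma ineq_step (P s : R) (u : nat) : 0 < s -> 0 <= P -> P <= u%:R / (u%:R + s) ->
  P * (phi s u)^-1 + (1 - P) * (2 / 3) <= 1.
Proof.
move=> hs hP hPu; have u0 : 0 <= u%:R :> R by [].
set U := u%:R in hPu u0 *.
have hus : 0 < U + s by rewrite ltr_wpDl.
have hPu' : P * (U + s) <= U by rewrite -ler_pdivlMr.
have hP1 : P <= 1.
  apply: le_trans hPu _; rewrite ler_pdivrMr // mul1r lerDl; exact: ltW.
have h3 : 0 < 3 * U + 2 * s by rewrite ltr_wpDl ?mulr_ge0 ?mulr_gt0.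
have key : P * (5 * s + 3 * U) <= 3 * U + 2 * s by nra.
rewrite /phi invf_div.
have -> : P * (3 * (s + U) / (3 * U + 2 * s)) + (1 - P) * (2 / 3) =
          1 - (3 * U + 2 * s - P * (5 * s + 3 * U)) / (3 * (3 * U + 2 * s)).
  by field; rewrite gt_eqF.
rewrite lerBlDr lerDl divr_ge0 ?subr_ge0 //.
by rewrite mulr_ge0 // ltW.
Qed.



Lemma phi_le_step s (v : nat) : 0 < s ->
  phi s v <= expR (- (s / 3) * (ln (s + v.+1%:R) - ln (s + v%:R))).
Proof.
move=> hs; have hsv : 0 < s + v%:R by rewrite ltr_wpDr.
have -> : phi s v = 1 + - (s / (3 * (s + v%:R))).
  by rewrite /phi; field; rewrite gt_eqF.
apply: le_trans (expR_ge1Dx _) _; rewrite ler_expR.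
rewrite mulNr lerN2.
have hl : ln (s + v.+1%:R) - ln (s + v%:R) <= (s + v%:R)^-1.
  rewrite -ln_div ?posrE ?(lt_le_trans hsv) ?lerD2l ?ler_nat //.
  have -> : (s + v.+1%:R) / (s + v%:R) = 1 + (s + v%:R)^-1.
    by rewrite -natr1; field; rewrite gt_eqF.
  by apply: le_ln1Dx; apply: lt_le_trans (_ : 0 <= _); rewrite ?invr_ge0 ?ltW // ltrN10.
have -> : s / (3 * (s + v%:R)) = (s / 3) * (s + v%:R)^-1 by field; rewrite gt_eqF.
by rewrite ler_wpM2l // divr_ge0 // ltW.
Qed.

Lemma prod_phi_le s (a m : nat) : 0 < s ->
  \prod_(a <= v < a + m) phi s v <=
  expR (- (s / 3) * (ln (s + (a + m)%:R) - ln (s + a%:R))).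
Proof.
move=> hs; elim: m => [|m IH].
  by rewrite addn0 big_geq // subrr mulr0 expR0.
rewrite addnS big_nat_recr ?leq_addr //=.
have -> : - (s / 3) * (ln (s + (a + m).+1%:R) - ln (s + a%:R)) =
          - (s / 3) * (ln (s + (a + m)%:R) - ln (s + a%:R)) +
          - (s / 3) * (ln (s + (a + m).+1%:R) - ln (s + (a + m)%:R)) by ring.
rewrite expRD; apply: ler_pM => //.
- apply: prodr_ge0 => v _; exact: ltW (phi_gt0 _ hs).
- exact: ltW (phi_gt0 _ hs).
- exact: phi_le_step.
Qed.

Lemma final_ineq (k D u : nat) : (2 <= k)%N -> (1 <= D <= k)%N ->
  let L : R := 8^-1 * ln (k%:R / D%:R) in
  let s : R := Num.sqrt k%:R + D%:R in
  3 / 2 <= L -> s * (L - 3 / 2) <= u%:R -> u%:R <= s * (L - 3 / 2) + 1 ->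
  (D + u)%:R / 2 - (s / 3) * (ln (s + k%:R) - ln (s + u%:R)) <= - Num.sqrt k%:R / 2
  /\ (u < k)%N.
Proof.
move=> hk /andP[hD1 hDk] L s hL hu1 hu2.
have k0 : 0 < k%:R :> R by rewrite ltr0n (leq_trans _ hk).
have D1 : 1 <= D%:R :> R by rewrite ler1n.
have Dk : D%:R <= k%:R :> R by rewrite ler_nat.
set sg := Num.sqrt k%:R.
have sg0 : 0 <= sg by exact: sqrtr_ge0.
have sg2 : sg ^+ 2 = k%:R by rewrite sqr_sqrtr // ltW.
have s1 : 1 <= s by rewrite /s -/sg; lra.
pose r : R := k%:R / D%:R.
have r1 : 1 <= r by rewrite /r ler_pdivlMr ?mul1r //; lra.
have rD : r * D%:R = k%:R by rewrite /r divfK // gt_eqF //; lra.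
pose q : R := Num.sqrt r.
have q0 : 0 < q by rewrite sqrtr_gt0; lra.
have q2 : q ^+ 2 = r by rewrite sqr_sqrtr //; lra.
have lnq : ln q = 4 * L.
  have : ln r = ln q + ln q by rewrite -lnM ?posrE // -expr2 q2.
  by rewrite /L -/r => ->; field.
have h1 : sg * q <= k%:R.
  have : (sg * q) ^+ 2 <= k%:R ^+ 2.
    rewrite exprMn sg2 q2 expr2 ler_pM2l // -rD ler_peMr //; lra.
  by move=> h; nra.
have h2 : D%:R * q <= k%:R.
  have : (D%:R * q) ^+ 2 <= k%:R ^+ 2.
    have e : D%:R ^+ 2 * r = D%:R * k%:R by rewrite -rD; ring.
    rewrite exprMn q2 e expr2; nra.
  by move=> h; nra.
have hks : s * q <= 2 * k%:R by rewrite /s -/sg; nra.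
have hsu : s + u%:R <= s * (L + 1 / 2) by nra.
have L0 : 0 < 2 * L + 1 by lra.
have hsu0 : 0 < s + u%:R by rewrite ltr_wpDr //; lra.
have hsk0 : 0 < s + k%:R by lra.
have hln : 2 * L <= ln (s + k%:R) - ln (s + u%:R).
  have e1 : ln (2 * L + 1) <= 2 * L by rewrite addrC le_ln1Dx //; lra.
  have e2 : ln q + ln (s + u%:R) <= ln (s + k%:R) + ln (2 * L + 1).
    rewrite -!lnM ?posrE // ler_ln ?posrE ?mulr_gt0 //.
    have : q * (s + u%:R) <= q * (s * (L + 1 / 2)) by rewrite ler_pM2l.
    move=> h; nra.
  lra.
split.
  have hsg : sg <= s by rewrite /s -/sg; lra.
  have : (s / 3) * (2 * L) <= (s / 3) * (ln (s + k%:R) - ln (s + u%:R)).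
    by rewrite ler_pM2l //; lra.
  have hs : s = sg + D%:R by [].
  have hsL : 0 <= s * (L - 3 / 2) by rewrite mulr_ge0 //; lra.
  move: hsu; rewrite natrD; set lk := ln (s + k%:R); set lu := ln (s + u%:R).
  move=> hsu h; nra.
rewrite ltnNge; apply/negP => hku.
have : ln (s + k%:R) <= ln (s + u%:R).
  by rewrite ler_ln ?posrE // lerD2l ler_nat.
lra.
Qed.
End Real.


Lemma sum_sub (R : realType) (I : finType) (P Q : pred I) (F : I -> R) :
  (forall i, Q i -> P i) -> (forall i, P i -> 0 <= F i) ->
  \sum_(i | Q i) F i <= \sum_(i | P i) F i.
Proof.
move=> hQP hF; rewrite [X in _ <= X](bigID Q) /=.
rewrite (eq_bigl Q); last by move=> i; case: (boolP (Q i)) => h; rewrite ?andbT ?andbF ?hQP.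
rewrite lerDl; apply: sumr_ge0 => i /andP[hP _]; exact: hF.
Qed.

Lemma prod_ge1 (R : realType) (a b : nat) (F : nat -> R) :
  (forall v, 1 <= F v) -> 1 <= \prod_(a <= v < b) F v.
Proof.
move=> hF; apply: (big_ind (fun x => 1 <= x)) => // x y hx hy.
exact: mulr_ege1.
Qed.

Section Main.
Variables (R : realType) (k D : nat).
Hypothesis hk : (1 < k)%N.
Hypothesis hD : (1 <= D <= k)%N.

Definition K := k.-1.
Definition n' := (4 * k * k)%N.
Definition NN := (2 * k + n')%N.
Definition ss : R := Num.sqrt k%:R + D%:R.
Definition AA : R := n'%:R / ss.
Definition XX := Xs NN K AA.
Local Notation n := (size XX).
Local Notation f := (fun i : 'I_n => nth 0 XX i).
Definition hit (t : seq 'I_n) (i : 'I_n) := (NN <= i)%N && (i \notin t).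
Definition uu (t : seq 'I_n) := #|[pred i : 'I_n | hit t i]|.
Definition Psi (t : seq 'I_n) : R :=
  (3 / 2) ^+ (K - uu t) * (2 / 3) ^+ (size t) *
  \prod_((uu t).+1 <= v < K.+1) (phi ss v)^-1.

Lemma k_gt0 : (0 < k)%N. Proof. exact: ltnW. Qed.
Lemma kK : k = K.+1. Proof. by rewrite /K prednK // k_gt0. Qed.

Lemma ss_ge1 : 1 <= ss.
Proof.
rewrite /ss; have := sqrtr_ge0 (k%:R : R); case/andP: hD => h1 _.
have : 1 <= D%:R :> R by rewrite ler1n. lra.
Qed.
Lemma ss_gt0 : 0 < ss. Proof. exact: lt_le_trans ltr01 ss_ge1. Qed.

Lemma ss_le2k : ss <= 2 * k%:R.
Proof.
rewrite /ss; case/andP: hD => _ h2.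
have hk1 : 1 <= k%:R :> R by rewrite ler1n k_gt0.
have : Num.sqrt (k%:R : R) <= k%:R.
  have := sqrtr_ge0 (k%:R : R); set q := Num.sqrt _ => q0.
  have q2 : q ^+ 2 = k%:R by rewrite sqr_sqrtr // ler0n.
  have q1 : 1 <= q.
    case: (lerP 1 q) => // hq; have : q ^+ 2 < 1 by rewrite expr2; nra.
    lra.
  move: q2; rewrite expr2 => q2; nra.
have : D%:R <= k%:R :> R by rewrite ler_nat.
lra.
Qed.

Lemma n'_ge : 2 * k%:R <= n'%:R :> R.
Proof.
have -> : (2 : R) * k%:R = (2 * k)%:R by rewrite natrM.
rewrite ler_nat /n'; have := hk; nia.
Qed.

Lemma AA_ge1 : 1 <= AA.
Proof.
rewrite /AA ler_pdivlMr ?ss_gt0 // mul1r.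
exact: le_trans ss_le2k n'_ge.
Qed.

Lemma sizeXX : n = (NN + K)%N. Proof. exact: size_Xs. Qed.

Lemma ltd (i : 'I_n) : (i < NN + K)%N.
Proof. by apply: leq_trans (ltn_ord i) _; rewrite sizeXX. Qed.

Lemma f_pt (i : 'I_n) : f i = pt NN K AA i.
Proof. by have := ltd i; rewrite /= /XX => h; exact: nth_Xs. Qed.

Definition cp (t : seq 'I_n) (i : 'I_n) := cost_pt (f i) [seq f j | j <- t].

Lemma cp_in (t : seq 'I_n) (i : 'I_n) : i \in t -> cp t i = 0.
Proof.
move=> hi; apply/eqP; rewrite eq_le cost_pt_ge0 andbT.
by rewrite -(sqdist_xx (f i)); apply: cost_pt_le; apply: map_f.
Qed.

Lemma cp_lo (t : seq 'I_n) (i : 'I_n) : t != [::] -> i \notin t -> 1 + w NN AA i ^+ 2 <= cp t i.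
Proof.
move=> ht hi; apply: cost_pt_ge; first by case: (t) ht.
move=> c /mapP[j hj ->]; rewrite !f_pt sqdist_pp ?ltd //.
have -> : (i : nat) == j = false.
  by apply/negP => /eqP hij; move: hi; rewrite (val_inj hij) hj.
by rewrite addrC lerD2l; exact: w2_ge1 AA_ge1 _.
Qed.

Lemma cp_hi (t : seq 'I_n) (i : 'I_n) : t != [::] -> cp t i <= 2 * AA.
Proof.
case: t => [|j t] // _; apply: le_trans (cost_pt_le _ (mem_head (f j) _)) _.
rewrite !f_pt sqdist_pp ?ltd //; case: eqP => _.
  by rewrite mulr_ge0 // (le_trans _ AA_ge1).
by rewrite mulr2n mulrDl mul1r lerD // w2_leA // AA_ge1.
Qed.

Lemma cost_cp (t : seq 'I_n) : cost XX [seq f j | j <- t] = \sum_(i : 'I_n) cp t i.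
Proof. by rewrite /cost (big_nth 0) big_mkord. Qed.


Lemma NN_le_n : (NN <= n)%N. Proof. by rewrite sizeXX leq_addr. Qed.

Lemma n_NN : (n - NN = K)%N. Proof. by rewrite sizeXX addKn. Qed.

Lemma uu_le (t : seq 'I_n) : (uu t <= K)%N.
Proof.
rewrite -n_NN -(card_ge NN_le_n); apply: subset_leq_card.
by apply/fintype.subsetP => i; rewrite !inE => /andP[].
Qed.

Lemma uu_nil : uu [::] = K.
Proof.
have e := card_ge NN_le_n; rewrite n_NN in e.
transitivity #|[pred i : 'I_n | (NN <= i)%N]|; last exact: e.
apply: eq_card => i.
by rewrite !inE /hit in_nil andbT.
Qed.

Lemma uu_rcons (t : seq 'I_n) (i : 'I_n) : uu (rcons t i) = (uu t - hit t i)%N.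
Proof.
rewrite /uu (cardD1 i [pred j | hit t j]) inE.
have -> : #|[pred j | hit (rcons t i) j]| = #|[predD1 [pred j | hit t j] & i]|.
  apply: eq_card => j; rewrite !inE /hit mem_rcons inE.
  by case: (j == i); rewrite ?andbF ?andbT //= ?andbT.
by rewrite addKn.
Qed.

Lemma Psi_rcons (t : seq 'I_n) (i : 'I_n) :
  Psi (rcons t i) = Psi t * (if hit t i then (phi ss (uu t))^-1 else 2 / 3).
Proof.
rewrite /Psi uu_rcons size_rcons exprS; case: ifP => hh; last first.
  rewrite subn0; set a := (3/2 : R) ^+ _; set b := (2/3 : R) ^+ _.
  set c := \prod_(_ <= v < _) _; ring.
have hu : (0 < uu t)%N.
  by rewrite /uu (cardD1 i) inE hh.
have hK := uu_le t.
move: hu hK; case: (uu t) => [|u] // _ hK; rewrite subn1 /=.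
rewrite (big_ltn (m := u.+1)) // -(subnSK hK) exprS.
set a := (3/2 : R) ^+ _; set b := (2/3 : R) ^+ _.
set c := \prod_(_ <= v < _) _; set p := phi ss u.+1.
have p0 : p != 0 by rewrite gt_eqF // phi_gt0 // ss_gt0.
by field.
Qed.

Lemma n_gt0 : (0 < n)%N. Proof. by apply: leq_trans NN_le_n; rewrite /NN addn_gt0 muln_gt0 k_gt0. Qed.

Lemma Psi_ge0 t : 0 <= Psi t.
Proof.
rewrite /Psi mulr_ge0 // ?mulr_ge0 ?exprn_ge0 //.
by apply: prodr_ge0 => v _; rewrite invr_ge0 ltW // phi_gt0 // ss_gt0.
Qed.

Lemma AAss : AA * ss = n'%:R.
Proof. by rewrite /AA divfK // gt_eqF // ss_gt0. Qed.

Lemma rest_ge (t : seq 'I_n) : t != [::] -> (size t <= 2 * k)%N ->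
  2 * n'%:R <= \sum_(i | ~~ hit t i) cp t i.
Proof.
move=> ht hs.
have h3 : \sum_(i : 'I_n | (i < NN)%N && (i \notin t)) cp t i <= \sum_(i | ~~ hit t i) cp t i.
  apply: sum_sub; first by move=> i /andP[h1 _]; rewrite /hit negb_and -ltnNge h1.
  by move=> i _; exact: cost_pt_ge0.
have h2 : \sum_(i : 'I_n | (i < NN)%N && (i \notin t)) (2 : R) <=
          \sum_(i : 'I_n | (i < NN)%N && (i \notin t)) cp t i.
  apply: ler_sum => i /andP[_ hi]; apply: le_trans (cp_lo ht hi).
  by rewrite lerD2l; exact: w2_ge1 AA_ge1 _.
apply: le_trans (le_trans h2 h3).
rewrite sumr_const -[X in _ <= X]mulr_natr ler_wpM2l // ler_nat.
apply: leq_trans (card_unch t NN_le_n); rewrite /NN.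
by rewrite -addnBAC ?leq_addl // leq_subLR addnC leq_add2l.
Qed.

Lemma hit_le (t : seq 'I_n) : t != [::] ->
  \sum_(i | hit t i) cp t i <= 2 * AA * (uu t)%:R.
Proof.
move=> ht; have h : \sum_(i | hit t i) cp t i <= \sum_(i | hit t i) (2 * AA).
  by apply: ler_sum => i _; exact: cp_hi.
by apply: le_trans h _; rewrite sumr_const -[X in X <= _]mulr_natr.
Qed.

Lemma step_cons (t : seq 'I_n) (i : 'I_n) : t != [::] ->
  seed_step XX [seq f j | j <- t] (f i) = cp t i / \sum_(j : 'I_n) cp t j.
Proof. by case: t => // j t _; rewrite -cost_cp. Qed.

Lemma step_nil (i : 'I_n) : seed_step XX [seq f j | j <- [::]] (f i) = (n%:R)^-1.
Proof. by []. Qed.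

Lemma n_pos : 0 < n%:R :> R. Proof. by rewrite ltr0n n_gt0. Qed.

Lemma cost_pos (t : seq 'I_n) : t != [::] -> (size t <= 2 * k)%N ->
  0 < \sum_(j : 'I_n) cp t j.
Proof.
move=> ht hs; rewrite (bigID (hit t)) /=.
have h1 := rest_ge ht hs.
have h2 : 0 <= \sum_(i | hit t i) cp t i by apply: sumr_ge0 => i _; exact: cost_pt_ge0.
have : 0 < n'%:R :> R by rewrite ltr0n /n' !muln_gt0 k_gt0.
lra.
Qed.

Lemma step_sum (t : seq 'I_n) : (size t <= 2 * k)%N ->
  \sum_(i : 'I_n) seed_step XX [seq f j | j <- t] (f i) = 1.
Proof.
move=> hs; case: (eqVneq t [::]) => [->|ht].
  under eq_bigr => i _ do rewrite step_nil.
  by rewrite sumr_const card_ord -(mulr_natr (n%:R)^-1) mulVf // gt_eqF // n_pos.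
under eq_bigr => i _ do rewrite step_cons //.
by rewrite -mulr_suml mulfV // gt_eqF // cost_pos.
Qed.

Lemma P_le (t : seq 'I_n) : (size t <= 2 * k)%N ->
  \sum_(i | hit t i) seed_step XX [seq f j | j <- t] (f i) <=
  (uu t)%:R / ((uu t)%:R + ss).
Proof.
move=> hs; have s0 := ss_gt0; have u0 : 0 <= (uu t)%:R :> R by [].
have us : 0 < (uu t)%:R + ss by rewrite ltr_wpDl.
case: (eqVneq t [::]) => [->|ht].
  under eq_bigr => i _ do rewrite step_nil.
  rewrite sumr_const -(mulr_natr (n%:R)^-1) mulrC.
  have hK : (uu [::])%:R = K%:R :> R by rewrite uu_nil.
  have hu0 : 0 < (uu [::])%:R + ss by rewrite ltr_wpDl.
  rewrite ler_wpM2l // lef_pV2 ?posrE ?n_pos //.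
  rewrite hK sizeXX natrD addrC lerD2r.
  by apply: le_trans ss_le2k _; rewrite /NN natrD natrM lerDl.
under eq_bigr => i _ do rewrite step_cons //.
rewrite -mulr_suml (bigID (hit t) predT) /=.
have h1 := rest_ge ht hs; have h2 := hit_le ht.
set H := \sum_(i | hit t i) cp t i in h2 *.
set Rs := \sum_(i | ~~ hit t i) cp t i in h1 *.
have H0 : 0 <= H by apply: sumr_ge0 => i _; exact: cost_pt_ge0.
have n0 : 0 < n'%:R :> R by rewrite ltr0n /n' !muln_gt0 k_gt0.
have HR : 0 < H + Rs by lra.
rewrite ler_pdivrMr // mulrAC ler_pdivlMr //.
have e := AAss; set U := (uu t)%:R in u0 us h2 *.
nra.
Qed.

Lemma step_Psi (t : seq 'I_n) : (size t < k + D)%N ->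
  \sum_(i : 'I_n) seed_step XX [seq f j | j <- t] (f i) * Psi (rcons t i) <= Psi t.
Proof.
move=> hT; have hs : (size t <= 2 * k)%N.
  case/andP: hD => _ hDk; apply: ltnW; apply: leq_trans hT _.
  by rewrite mul2n -addnn leq_add2l.
under eq_bigr => i _ do rewrite Psi_rcons mulrCA.
rewrite -mulr_sumr -[X in _ <= X]mulr1 ler_wpM2l ?Psi_ge0 //.
rewrite (bigID (hit t) predT) /=.
rewrite (eq_bigr (fun i => seed_step XX [seq f j | j <- t] (f i) * (phi ss (uu t))^-1));
  last by move=> i ->.
rewrite [X in _ + X <= _](eq_bigr (fun i => seed_step XX [seq f j | j <- t] (f i) * (2 / 3)));
  last by move=> i /negbTE ->.
rewrite -!mulr_suml.
have e := step_sum hs; rewrite (bigID (hit t) predT) /= in e.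
set P := \sum_(i | hit t i) _ in e *.
have -> : \sum_(i | ~~ hit t i) seed_step XX [seq f j | j <- t] (f i) = 1 - P by lra.
apply: ineq_step; first exact: ss_gt0.
  by apply: sumr_ge0 => i _; exact: seed_step_ge0.
exact: P_le hs.
Qed.

Lemma B_ge (t : seq 'I_n) : t != [::] -> (size t <= 2 * k)%N ->
  2 * n'%:R <= \sum_(i : 'I_n | (i < NN)%N && (i \notin t)) cp t i.
Proof.
move=> ht hs.
have h2 : \sum_(i : 'I_n | (i < NN)%N && (i \notin t)) (2 : R) <=
          \sum_(i : 'I_n | (i < NN)%N && (i \notin t)) cp t i.
  apply: ler_sum => i /andP[_ hi]; apply: le_trans (cp_lo ht hi).
  by rewrite lerD2l; exact: w2_ge1 AA_ge1 _.
apply: le_trans h2.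
rewrite sumr_const -[X in _ <= X]mulr_natr ler_wpM2l // ler_nat.
apply: leq_trans (card_unch t NN_le_n); rewrite /NN.
by rewrite -addnBAC ?leq_addl // leq_subLR addnC leq_add2l.
Qed.

Lemma cost_final (t : seq 'I_n) : t != [::] -> (size t <= 2 * k)%N ->
  2 * n'%:R + AA * (uu t)%:R <= cost XX [seq f j | j <- t].
Proof.
move=> ht hs; rewrite cost_cp (bigID (fun i : 'I_n => (i < NN)%N) predT) /=.
apply: lerD.
  apply: le_trans (B_ge ht hs) _; apply: sum_sub; first by move=> i /andP[].
  by move=> i _; exact: cost_pt_ge0.
have h1 : \sum_(i | hit t i) cp t i <= \sum_(i : 'I_n | ~~ (i < NN)%N) cp t i.
  apply: sum_sub; first by move=> i /andP[h _]; rewrite -leqNgt.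
  by move=> i _; exact: cost_pt_ge0.
apply: le_trans h1.
have h2 : \sum_(i | hit t i) AA <= \sum_(i | hit t i) cp t i.
  apply: ler_sum => i /andP[hN hi]; apply: le_trans (cp_lo ht hi).
  rewrite w2 ?AA_ge1 //; case: ifP => h; last by have := AA_ge1; lra.
  by move: h; rewrite ltnNge hN.
apply: le_trans h2; rewrite sumr_const -[X in _ <= X]mulr_natr //.
Qed.

Lemma OPT_le : OPT k XX <= NN%:R.
Proof.
pose C0 : seq 'rV[R]_(NN + K) := 0 :: [seq pt NN K AA j | j <- iota NN K].
have hC : uniq C0 /\ size C0 = k.
  split; last by rewrite /= size_map size_iota -kK.
  rewrite /= map_inj_in_uniq ?iota_uniq ?andbT.
    apply/mapP => -[j]; rewrite mem_iota => /andP[_ hj] /esym h.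
    have hj' : (j < NN + K)%N by [].
    move/(congr1 (fun x : 'rV[R]_(NN + K) => x ord0 (Ordinal hj'))): h.
    by rewrite !mxE /= eqxx => /eqP; apply/negP; exact: w_neq0 AA_ge1 _.
  by move=> i j; rewrite !mem_iota => /andP[_ hi] /andP[_ hj]; apply: (pt_inj AA_ge1).
have hc : cost XX C0 <= NN%:R.
  rewrite /cost /XX /Xs big_map.
  apply: le_trans (_ : \sum_(i <- iota 0 (NN + K)) (if (i < NN)%N then 1 else 0) <= _).
    rewrite big_seq_cond [X in _ <= X]big_seq_cond; apply: ler_sum => i.
    rewrite andbT mem_iota add0n => /andP[_ hi]; case: ifP => hiN.
      apply: le_trans (cost_pt_le _ (mem_head _ _)) _.
      by rewrite sqdist_p0 // /w hiN expr1n.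
    apply: le_trans (cost_pt_le _ (_ : pt NN K AA i \in C0)) _.
      by rewrite inE; apply/orP; right; apply: map_f; rewrite mem_iota hi leqNgt hiN.
    by rewrite sqdist_xx.
  have -> : iota 0 (NN + K) = index_iota 0 (NN + K) by rewrite /index_iota subn0.
  rewrite (big_cat_nat (n := NN)) //= ?leq_addr.
  rewrite big_nat_cond (eq_bigr (fun _ => 1)); last by move=> i /andP[/andP[_ ->]].
  rewrite -big_nat_cond sumr_const_nat subn0 big_nat_cond big1 ?addr0 //.
  by move=> i /andP[/andP[h _] _]; rewrite ltnNge h.
  done.
rewrite /OPT; apply: le_trans hc; apply: ge_inf; last by exists C0.
exists 0 => y [C _ <-]; exact: cost_ge0.
Qed.

Lemma phi_le1 v : phi ss v <= 1.
Proof.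
rewrite /phi ler_pdivrMr ?mul1r; last by rewrite mulr_gt0 // ltr_wpDr // ss_gt0.
have := ss_gt0; lra.
Qed.

Lemma phiV_ge1 v : 1 <= (phi ss v)^-1.
Proof. by rewrite invf_ge1 ?phi_le1 // phi_gt0 // ss_gt0. Qed.

Lemma Psi_nil : Psi [::] = 1.
Proof. by rewrite /Psi uu_nil subnn expr0 mul1r expr0 mul1r big_geq. Qed.

Lemma size_le2k (t : seq 'I_n) : (size t <= k + D)%N -> (size t <= 2 * k)%N.
Proof.
case/andP: hD => _ hDk h; apply: leq_trans h _.
by rewrite mul2n -addnn leq_add2l.
Qed.

Lemma total_mass :
  1 <= \sum_(t : (k + D).-tuple 'I_n) seed_prob XX [seq f j | j <- t] * 1.
Proof.
apply: (pot_ge (Psi := fun _ => 1)) => t ht /=.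
under eq_bigr => i _ do rewrite mulr1.
by rewrite step_sum // size_le2k // ltnW.
Qed.

Lemma L_lt_k : 8^-1 * ln (k%:R / D%:R) < k%:R :> R.
Proof.
case/andP: hD => hD1 hDk.
have D1 : 1 <= D%:R :> R by rewrite ler1n.
have k1 : 1 <= k%:R :> R by rewrite ler1n k_gt0.
have r1 : k%:R / D%:R <= k%:R :> R by rewrite ler_pdivrMr ?ler_peMr //; lra.
have r0 : -1 < k%:R / D%:R - 1 :> R.
  have : 0 < k%:R / D%:R :> R by rewrite divr_gt0 //; lra.
  lra.
have := le_ln1Dx r0; rewrite addrC subrK => h; lra.
Qed.

Lemma L_ge0 : 0 <= 8^-1 * ln (k%:R / D%:R) :> R.
Proof.
case/andP: hD => hD1 hDk; rewrite mulr_ge0 // ln_ge0 //.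
by rewrite ler_pdivlMr ?mul1r ?ler_nat // ltr0n.
Qed.

Lemma event_ok (t : seq 'I_n) (ust : nat) : size t = (k + D)%N ->
  let L : R := 8^-1 * ln (k%:R / D%:R) in
  (L < 3 / 2 \/ (ss * (L - 3 / 2) <= ust%:R /\ (ust <= uu t)%N)) ->
  L * OPT k XX < cost XX [seq f j | j <- t].
Proof.
move=> hs L hL.
have ht : t != [::].
  by apply/eqP => h; move: hs; rewrite h /=; have := k_gt0; case: (k) => // k' _; rewrite addSn.
have hc := cost_final ht (size_le2k (eq_leq hs)).
have hO := OPT_le; have L0 := L_ge0; have Lk := L_lt_k.
have hLO : L * OPT k XX <= L * NN%:R by rewrite ler_wpM2l.
apply: le_lt_trans hLO _; apply: lt_le_trans hc.
have kk : (2 : R) <= k%:R by rewrite ler_nat.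
have en' : n'%:R = 4 * k%:R * k%:R :> R by rewrite /n' !natrM.
have eNN : NN%:R = 2 * k%:R + n'%:R :> R by rewrite /NN natrD natrM.
have u0 : 0 <= AA * (uu t)%:R by rewrite mulr_ge0 // (le_trans _ AA_ge1).
case: hL => [hL|[h1 h2]].
  rewrite eNN en'; rewrite -/L in hL Lk L0; nra.
have hu : ss * (L - 3 / 2) <= (uu t)%:R by apply: le_trans h1 _; rewrite ler_nat.
have hA : AA * (ss * (L - 3 / 2)) <= AA * (uu t)%:R.
  by rewrite ler_wpM2l // (le_trans _ AA_ge1).
rewrite mulrA AAss in hA.
rewrite eNN en' in hA *; rewrite -/L in Lk L0; nra.
Qed.

Lemma main_bound :
  1 - expR (- Num.sqrt (k%:R : R) / 2) <=
  kmpp_prob XX (k + D) (fun C => 8^-1 * ln (k%:R / D%:R) * OPT k XX < cost XX C).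
Proof.
rewrite /kmpp_prob /=.
set L : R := 8^-1 * ln (k%:R / D%:R).
have tm := total_mass.
have e0 : 0 <= expR (- Num.sqrt (k%:R : R) / 2) by exact: expR_ge0.
case: (ltrP L (3 / 2)) => hL.
  apply: le_trans (_ : 1 <= _); first by lra.
  apply: le_trans tm _; apply: ler_sum => t _.
  by rewrite (@event_ok t 0 (size_tuple t)) //; left.
pose ust := (Num.truncn (ss * (L - 3 / 2))).+1.
have hx0 : 0 <= ss * (L - 3 / 2) by rewrite mulr_ge0 ?(ltW ss_gt0) //; lra.
have hu1 : ss * (L - 3 / 2) <= ust%:R by apply: ltW; exact: truncnS_gt.
have hu2 : ust%:R <= ss * (L - 3 / 2) + 1.
  by rewrite /ust -natr1 lerD2r truncn_le.
have [hfin hust] := final_ineq hk hD hL hu1 hu2.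
have hustK : (ust <= K.+1)%N by rewrite -kK ltnW.
pose m := (3 / 2 : R) ^+ (K.+1 - ust) * (2 / 3) ^+ (k + D) *
          \prod_(ust <= v < K.+1) (phi ss v)^-1.
have m0 : 0 < m.
  rewrite /m !mulr_gt0 ?exprn_gt0 //; apply: prodr_gt0 => v _.
  by rewrite invr_gt0 phi_gt0 // ss_gt0.
have hE : forall t : (k + D).-tuple 'I_n,
    seed_prob XX [seq f j | j <- t] * (1 - Psi t / m) <=
    seed_prob XX [seq f j | j <- t] *
      (L * OPT k XX < cost XX [seq f j | j <- t])%R%:R.
  move=> t; apply: ler_wpM2l; first exact: seed_prob_ge0.
  case: (leqP ust (uu t)) => hut.
    rewrite (@event_ok t ust (size_tuple t)); last by right.
    by rewrite lerBlDr lerDl divr_ge0 // ?Psi_ge0 // ltW.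
  apply: le_trans (_ : 0 <= _); last by case: (_ < _).
  rewrite subr_le0 ler_pdivlMr // mul1r /Psi /m size_tuple.
  apply: ler_pM.
  - by rewrite mulr_ge0 // exprn_ge0.
  - by rewrite prodr_ge0 // => v _; rewrite invr_ge0 ltW // phi_gt0 // ss_gt0.
  - apply: ler_pM => //; rewrite ler_eXn2l; last by lra.
    have -> : (K - uu t = K.+1 - (uu t).+1)%N by rewrite subSS.
    exact: leq_sub2l.
  - rewrite [X in _ <= X](big_cat_nat (n := ust)) //=.
    rewrite -[X in X <= _]mul1r ler_pM //.
    + by rewrite prodr_ge0 // => v _; rewrite invr_ge0 ltW // phi_gt0 // ss_gt0.
    + by apply: prod_ge1 => v; exact: phiV_ge1.
apply: le_trans (ler_sum _ (fun t _ => hE t)).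
under eq_bigr => t _ do rewrite mulrBr mulr1.
rewrite sumrB; apply: lerB.
  by apply: le_trans tm _; under eq_bigr => t _ do rewrite mulr1.
under eq_bigr => t _ do rewrite mulrA.
rewrite -mulr_suml.
apply: le_trans (_ : Psi [::] / m <= _).
  apply: ler_wpM2r; first by rewrite invr_ge0 ltW.
  by apply: pot_le => t ht; apply: step_Psi.
rewrite Psi_nil mul1r.
have P0 : 0 < \prod_(ust <= v < K.+1) phi ss v.
  by apply: prodr_gt0 => v _; rewrite phi_gt0 // ss_gt0.
have eT : (k + D = (D + ust) + (K.+1 - ust))%N.
  by have := kK; have := hust; lia.
have em : m^-1 = (3/2 : R) ^+ (D + ust) * \prod_(ust <= v < K.+1) phi ss v.
  rewrite /m eT exprD prodfV.
  have h23 : (2/3 : R) = (3/2)^-1 by field.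
  rewrite h23 !exprVn.
  set p := (3/2 : R) ^+ (D + ust); set q := (3/2 : R) ^+ (K.+1 - ust).
  set P := \prod_(_ <= v < _) _.
  have p0 : p != 0 by rewrite expf_neq0.
  have q0 : q != 0 by rewrite expf_neq0.
  by field; rewrite q0 p0 gt_eqF.
have hp : (3/2 : R) ^+ (D + ust) <= expR ((D + ust)%:R / 2).
  rewrite expRM_natl lerXn2r ?nnegrE ?expR_ge0 //.
  by apply: le_trans (expR_ge1Dx _); lra.
have hP := prod_phi_le ust (K.+1 - ust) ss_gt0.
rewrite subnKC // in hP.
rewrite em; apply: le_trans (ler_pM _ _ hp hP) _.
- by rewrite exprn_ge0.
- exact: ltW.
rewrite -expRD ler_expR -kK.
move: hfin; rewrite /ss; lra.
Qed.
End Main.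

Unset Implicit Arguments.

Theorem mainTheorem17 (R : realType) (k Delta : nat) :
  (1 < k)%N -> (1 <= Delta <= k)%N ->
  exists (d : nat) (X : seq 'rV[R]_d),
    uniq X /\
    1 - expR (- Num.sqrt (k%:R) / 2) <=
      kmpp_prob X (k + Delta)
        (fun C => 8^-1 * ln (k%:R / Delta%:R) * OPT k X < cost X C).
Proof.
move=> hk hD; exists (NN k + K k)%N, (XX R k Delta); split.
  by apply: uniq_Xs; apply: AA_ge1.
by apply: main_bound.
Qed.
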